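(* Let $A\in\mathbb{C}^{n\times n}$, $B\in\mathbb{C}^{n\times m}$, $C\in\mathbb{C}^{p\times n}$, $D\in\mathbb{C}^{p\times m}$, $F\in\mathbb{C}^{\nu\times\nu}$ with $\mathrm{eig}(A)\cap\mathrm{eig}(F)=\emptyset$. Then for all $H\in\mathbb{C}^{m\times\nu}$ and $G\in\mathbb{C}^{\nu\times p}$, $$\mathcal{C}_{\rm p}(H)=\sum_{k=1}^{l}\sum_{j=0}^{m_k-1}(-1)^j\mathcal{M}_j(\lambda_k)\,H\,X_{k,j},\qquad \mathcal{C}_{\rm d}(G)=\sum_{k=1}^{l}\sum_{j=0}^{m_k-1}(-1)^j X_{k,j}\,G\,\mathcal{M}_j(\lambda_k).$$
   Context: The steady-state cascade (SSC) operators are defined as follows: for $H\in\mathbb{C}^{m\times\nu}$, $\mathcal{C}_{\rm p}(H)=C\Pi+DH$, where $\Pi\in\mathbb{C}^{n\times\nu}$ is the unique solution of the Sylvester equation $\Pi F - A\Pi = BH$; for $G\in\mathbb{C}^{\nu\times p}$, $\mathcal{C}_{\rm d}(G)=-MB+GD$, where $M\in\mathbb{C}^{\nu\times n}$ is the unique solution of $MA-FM=GC$. Transfer matrix $\hat\Sigma(s)=C(sI_n-A)^{-1}B+D$. For $k\in\mathbb{Z}_{\ge0}$ and $s_0\notin\mathrm{eig}(A)$, the $k$-th moment matrix is $\mathcal{M}_k(s_0)=\frac{(-1)^k}{k!}\frac{d^k}{ds^k}\hat\Sigma(s)\big|_{s=s_0}\in\mathbb{C}^{p\times m}$; equivalently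 $\mathcal{M}_0(s_0)=\hat\Sigma(s_0)$ and $\mathcal{M}_k(s_0)=C(s_0I_n-A)^{-(k+1)}B$ for $k\ge1$. Let $\lambda_1,\dots,\lambda_l$ be the distinct eigenvalues of $F$ with algebraic multiplicities $m_1,\dots,m_l$. Let $F=V\mathcal{J}V^{-1}$ be a Jordan decomposition with $\mathcal{J}=\mathrm{diag}(\mathcal{J}_1,\dots,\mathcal{J}_l)$, where $\mathcal{J}_k\in\mathbb{C}^{m_k\times m_k}$ collects the Jordan blocks for $\lambda_k$, written $\mathcal{J}_k=\lambda_kI_{m_k}+N_k$ with $N_k$ nilpotent. Partition $V=[V_1\ \cdots\ V_l]$ with $V_k\in\mathbb{C}^{\nu\times m_k}$ and $V^{-1}=\mathrm{col}(W_1^*,\dots,W_l^* )$ with $W_k\in\mathbb{C}^{\nu\times m_k}$ ($^*$ = conjugate transpose). Define $X_{k,j}=V_kN_k^jW_k^*\in\mathbb{C}^{\nu\times\nu}$ for $j\in\{0,\dots,m_k-1\}$. *)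

(* Defs.v *)
(* Complex numbers are modelled as R[i] (mathcomp-real-closed
   `complex`) over an arbitrary real number field R : realType, so R[i] = C. *)
From HB Require Import structures.
From mathcomp Require Import all_boot all_order all_algebra.
From mathcomp Require Import complex.
From mathcomp Require Import reals.
Set Implicit Arguments. Unset Strict Implicit. Unset Printing Implicit Defensive.
Import Order.TTheory GRing.Theory Num.Theory.
Local Open Scope ring_scope.

Section SSC.
Variable R : realType.
Local Notation C := (R[i]).

Definition ctrmx (q r : nat) (W : 'M[C]_(q, r)) : 'M[C]_(r, q) :=
  (map_mx (@conjc R) W)^T.

Definition transfer (n m p : nat) (A : 'M[C]_n) (B : 'M[C]_(n, m))
  (Cm : 'M[C]_(p, n)) (D : 'M[C]_(p, m)) (s : C) : 'M[C]_(p, m) :=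
  Cm *m invmx (s%:M - A) *m B + D.

(* k-th moment at s0 (s0 not an eigenvalue of A), in the equivalent form
   M_0(s0) = Sigma(s0), M_k(s0) = C (s0 I - A)^{-(k+1)} B for k >= 1. *)
Definition moment (n m p : nat) (A : 'M[C]_n) (B : 'M[C]_(n, m))
  (Cm : 'M[C]_(p, n)) (D : 'M[C]_(p, m)) (k : nat) (s0 : C) : 'M[C]_(p, m) :=
  if k == 0%N then transfer A B Cm D s0
  else Cm *m (invmx (s0%:M - A)) ^+ k.+1 *m B.

Definition is_Cp (n m p nu : nat) (A : 'M[C]_n) (B : 'M[C]_(n, m))
  (Cm : 'M[C]_(p, n)) (D : 'M[C]_(p, m)) (F : 'M[C]_nu)
  (H : 'M[C]_(m, nu)) (Y : 'M[C]_(p, nu)) : Prop :=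
  exists Pi : 'M[C]_(n, nu),
    [/\ Pi *m F - A *m Pi = B *m H,
        (forall Pi' : 'M[C]_(n, nu), Pi' *m F - A *m Pi' = B *m H -> Pi' = Pi)
      & Y = Cm *m Pi + D *m H].

Definition is_Cd (n m p nu : nat) (A : 'M[C]_n) (B : 'M[C]_(n, m))
  (Cm : 'M[C]_(p, n)) (D : 'M[C]_(p, m)) (F : 'M[C]_nu)
  (G : 'M[C]_(nu, p)) (Y : 'M[C]_(nu, m)) : Prop :=
  exists M : 'M[C]_(nu, n),
    [/\ M *m A - F *m M = G *m Cm,
        (forall M' : 'M[C]_(nu, n), M' *m A - F *m M' = G *m Cm -> M' = M)
      & Y = - M *m B + G *m D].

(* N is the nilpotent part of a direct sum of Jordan blocks (all for the same
   eigenvalue): its only nonzero entries are ones on the superdiagonal. *)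
Definition jordan_nil (q : nat) (N : 'M[C]_q) : Prop :=
  forall i j : 'I_q, N i j = 0 \/ ((j : nat) = i.+1 /\ N i j = 1).

End SSC.

(* Main.v *)
Require Import Defs.
From HB Require Import structures.
From mathcomp Require Import all_boot all_order all_algebra.
From mathcomp Require Import complex.
From mathcomp Require Import reals.
Set Implicit Arguments. Unset Strict Implicit. Unset Printing Implicit Defensive.
Import Order.TTheory GRing.Theory Num.Theory.
Local Open Scope ring_scope.

Section Blk.
Variable K : fieldType.

Lemma tele_ord (V : zmodType) (q : nat) (a : nat -> V) :
  \sum_(j < q) (a j - a j.+1) = a 0%N - a q.
Proof.
rewrite -(big_mkord xpredT (fun j => a j - a j.+1)).
rewrite (@telescope_sumr_eq V 0 q (fun j => - a j)) ?leq0n //.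
  by rewrite opprK addrC.
by move=> k _; rewrite opprK addrC.
Qed.

Lemma sylv_p (n q : nat) (A : 'M[K]_n) (lam : K) (N : 'M[K]_q) (Y : 'M[K]_(n, q))
  (hN : N ^+ q = 0) (hu : lam%:M - A \in unitmx) (P : 'M[K]_(n, q)) :
  P *m (lam%:M + N) - A *m P = Y <->
  P = \sum_(j < q) (-1) ^+ j *: (invmx (lam%:M - A) ^+ j.+1 *m Y *m N ^+ j).
Proof.
set U := lam%:M - A; set Rm := invmx U.
have SE : forall P' : 'M[K]_(n, q), P' *m (lam%:M + N) - A *m P' = U *m P' + P' *m N.
  move=> P'; rewrite mulmxDr mul_mx_scalar /U mulmxBl mul_scalar_mx.
  by rewrite addrAC.
have UR : forall j, U *m Rm ^+ j.+1 = Rm ^+ j.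
  by move=> j; rewrite exprS -mulmxE mulmxA mulmxV // mul1mx.
set P0 := \sum_(j < q) _.
have S0 : U *m P0 + P0 *m N = Y.
  rewrite /P0 mulmx_sumr mulmx_suml -big_split /=.
  rewrite (eq_bigr (fun j : 'I_q => (-1) ^+ j *: (Rm ^+ j *m Y *m N ^+ j)
            - (-1) ^+ j.+1 *: (Rm ^+ j.+1 *m Y *m N ^+ j.+1))).
    by rewrite (tele_ord _ (fun j => (-1) ^+ j *: (Rm ^+ j *m Y *m N ^+ j))) hN
      mulmx0 scaler0 subr0 expr0 scale1r mul1mx mulmx1.
  move=> j _; rewrite -scalemxAr !mulmxA UR.
  have hNN : forall X : 'M[K]_(n, q), X *m N ^+ j *m N = X *m N ^+ j.+1.
    by move=> X; rewrite -mulmxA mulmxE -exprSr.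
  by rewrite -scalemxAl hNN [(-1) ^+ j.+1]exprS mulN1r scaleNr opprK.
have uniq0 : forall Z : 'M[K]_(n, q), U *m Z + Z *m N = 0 -> Z = 0.
  move=> Z hZ.
  have hZ1 : Z = - (Rm *m Z *m N).
    have : Rm *m (U *m Z + Z *m N) = 0 by rewrite hZ mulmx0.
    rewrite mulmxDr mulmxA mulVmx // mul1mx mulmxA => /eqP.
    by rewrite addr_eq0 => /eqP.
  have hj : forall j, Z = (-1) ^+ j *: (Rm ^+ j *m Z *m N ^+ j).
    elim=> [|j IH]; first by rewrite !expr0 scale1r mul1mx mulmx1.
    rewrite {1}IH {1}hZ1 mulmxN mulNmx scalerN -scaleNr -mulN1r -exprS.
    by congr (_ *: _); rewrite exprSr [N ^+ j.+1]exprS -!mulmxE !mulmxA.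
  by rewrite (hj q) hN mulmx0 scaler0.
split.
  move=> hP; apply/eqP; rewrite -subr_eq0; apply/eqP/uniq0.
  have E : forall X1 X2 : 'M[K]_(n, q),
      U *m (X1 - X2) + (X1 - X2) *m N = (U *m X1 + X1 *m N) - (U *m X2 + X2 *m N).
    by move=> X1 X2; rewrite [U *m _]mulmxBr [_ *m N]mulmxBl addrACA -opprD.
  by rewrite E S0 -SE hP subrr.
by move=> ->; rewrite SE.
Qed.

Lemma sylv_d (n q : nat) (A : 'M[K]_n) (lam : K) (N : 'M[K]_q) (Z : 'M[K]_(q, n))
  (hN : N ^+ q = 0) (hu : lam%:M - A \in unitmx) (Q : 'M[K]_(q, n)) :
  Q *m A - (lam%:M + N) *m Q = Z <->
  Q = - \sum_(j < q) (-1) ^+ j *: (N ^+ j *m Z *m invmx (lam%:M - A) ^+ j.+1).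
Proof.
set U := lam%:M - A; set Rm := invmx U.
have SE : forall Q' : 'M[K]_(q, n), Q' *m A - (lam%:M + N) *m Q' = - (Q' *m U + N *m Q').
  move=> Q'; rewrite mulmxDl mul_scalar_mx /U mulmxBr mul_mx_scalar.
  by rewrite [RHS]opprD opprB opprD addrA.
have RU : forall j, Rm ^+ j.+1 *m U = Rm ^+ j.
  by move=> j; rewrite exprSr -mulmxE -mulmxA mulVmx // mulmx1.
set Q0 := (\sum_(j < q) _ : 'M[K]_(q, n)).
have S0 : (- Q0) *m U + N *m (- Q0) = - Z.
  rewrite mulNmx mulmxN -opprD; congr (- _).
  rewrite /Q0 mulmx_sumr mulmx_suml -big_split /=.
  rewrite (eq_bigr (fun j : 'I_q => (-1) ^+ j *: (N ^+ j *m Z *m Rm ^+ j)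
            - (-1) ^+ j.+1 *: (N ^+ j.+1 *m Z *m Rm ^+ j.+1))).
    by rewrite (tele_ord _ (fun j => (-1) ^+ j *: (N ^+ j *m Z *m Rm ^+ j))) hN
      !mul0mx scaler0 subr0 expr0 scale1r mul1mx mulmx1.
  move=> j _; rewrite -scalemxAl -!mulmxA RU.
  have hNN : forall X : 'M[K]_(q, n), N *m (N ^+ j *m X) = N ^+ j.+1 *m X.
    by move=> X; rewrite mulmxA mulmxE -exprS.
  by rewrite -scalemxAr hNN [(-1) ^+ j.+1]exprS mulN1r scaleNr opprK.
have uniq0 : forall Y : 'M[K]_(q, n), Y *m U + N *m Y = 0 -> Y = 0.
  move=> Y hY.
  have hY1 : Y = - (N *m Y *m Rm).
    have : (Y *m U + N *m Y) *m Rm = 0 by rewrite hY mul0mx.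
    rewrite mulmxDl -mulmxA mulmxV // mulmx1 => /eqP.
    by rewrite addr_eq0 => /eqP.
  have hj : forall j, Y = (-1) ^+ j *: (N ^+ j *m Y *m Rm ^+ j).
    elim=> [|j IH]; first by rewrite !expr0 scale1r mul1mx mulmx1.
    rewrite {1}IH {1}hY1 mulmxN mulNmx scalerN -scaleNr -mulN1r -exprS.
    by congr (_ *: _); rewrite exprSr [Rm ^+ j.+1]exprS -!mulmxE !mulmxA.
  by rewrite (hj q) hN !mul0mx scaler0.
split.
  move=> hQ; apply/eqP; rewrite -subr_eq0; apply/eqP/uniq0.
  have E : forall X1 X2 : 'M[K]_(q, n),
      (X1 - X2) *m U + N *m (X1 - X2) = (X1 *m U + N *m X1) - (X2 *m U + N *m X2).
    by move=> X1 X2; rewrite [_ *m U]mulmxBl [N *m _]mulmxBr addrACA -opprD.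
  rewrite E.
  have -> : Q *m U + N *m Q = - Z by rewrite -hQ SE opprK.
  by rewrite S0 subrr.
by move=> ->; rewrite SE S0 opprK.
Qed.

End Blk.

Lemma mxrow_mxdiag (K : fieldType) (l m : nat) (q_ : 'I_l -> nat)
  (V : forall k, 'M[K]_(m, q_ k)) (J : forall k, 'M[K]_(q_ k)) :
  \mxrow_k V k *m \mxdiag_k J k = \mxrow_k (V k *m J k).
Proof.
rewrite /mxdiag mul_mxrow_mxblock; apply: eq_mxrow => j.
rewrite (bigD1 j) //= eqxx conform_mx_id big1 ?addr0 // => i /negbTE ->.
by rewrite mulmx0.
Qed.

Lemma mxdiag_mxcol (K : fieldType) (l m : nat) (q_ : 'I_l -> nat)
  (W : forall k, 'M[K]_(q_ k, m)) (J : forall k, 'M[K]_(q_ k)) :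
  \mxdiag_k J k *m \mxcol_k W k = \mxcol_k (J k *m W k).
Proof.
rewrite /mxdiag mul_mxblock_mxrow; apply: eq_mxcol => j.
rewrite (bigD1 j) //= eqxx conform_mx_id big1 ?addr0 // => i.
by rewrite eq_sym => /negbTE ->; rewrite mul0mx.
Qed.

Lemma submxblock1 (K : fieldType) (l : nat) (q_ : 'I_l -> nat) k :
  submxblock (1%:M : 'M[K]_(\sum_k q_ k)) k k = 1%:M.
Proof.
apply/matrixP => a b; rewrite !mxE.
have -> : (tagnat.Rank k a == tagnat.Rank k b) = (a == b).
  by rewrite -val_eqE /= tagnat.eq_Rank eqxx.
done.
Qed.

Lemma nil_pow (R : realType) (q : nat) (N : 'M[R[i]]_q) :
  jordan_nil N -> N ^+ q = 0.
Proof.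
move=> hN.
have key : forall k (i j : 'I_q), (j : nat) != (i + k)%N -> (N ^+ k) i j = 0.
  elim=> [|k IH] i j hij.
    rewrite addn0 in hij; rewrite expr0 mxE (_ : (i == j) = false) //.
    by apply/negbTE; apply: contra hij => /eqP ->.
  rewrite exprSr mxE big1 // => l _.
  have [hl|hl] := eqVneq (l : nat) (i + k)%N.
    case: (hN l j) => [->|[hj _]]; first by rewrite mulr0.
    by move: hij; rewrite hj hl addnS eqxx.
  by rewrite IH ?mul0r.
apply/matrixP => i j; rewrite mxE key //.
by rewrite neq_ltn (leq_trans (ltn_ord j)) // leq_addl.
Qed.

Lemma momentE (R : realType) (n m p : nat) (A : 'M[R[i]]_n) (B : 'M[R[i]]_(n, m))
  (Cm : 'M[R[i]]_(p, n)) (D : 'M[R[i]]_(p, m)) (j : nat) (s : R[i]) :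
  moment A B Cm D j s = Cm *m invmx (s%:M - A) ^+ j.+1 *m B + (j == 0%N)%:R *: D.
Proof.
rewrite /moment /transfer; case: j => [|j] /=.
  by rewrite expr1 scale1r.
by rewrite scale0r addr0.
Qed.

Lemma sum_delta0 (K : fieldType) (V : lmodType K) (q : nat) (f : nat -> V) :
  (0 < q)%N -> \sum_(j < q) (((j : nat) == 0%N)%:R : K) *: f j = f 0%N.
Proof.
case: q => // q _; rewrite big_ord_recl /= scale1r big1 ?addr0 // => i _.
by rewrite scale0r.
Qed.

Theorem theorem3 (R : realType) (n m p nu : nat)
  (A : 'M[R[i]]_n) (B : 'M[R[i]]_(n, m)) (Cm : 'M[R[i]]_(p, n))
  (D : 'M[R[i]]_(p, m)) (F : 'M[R[i]]_nu)
  (* eig(A) and eig(F) are disjoint *)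
  (hAF : forall a : R[i], eigenvalue A a -> ~~ eigenvalue F a)
  (* Jordan decomposition data of F *)
  (l : nat) (lam : 'I_l -> R[i]) (mult : 'I_l -> nat)
  (V : forall k : 'I_l, 'M[R[i]]_(nu, mult k))
  (W : forall k : 'I_l, 'M[R[i]]_(nu, mult k))
  (N : forall k : 'I_l, 'M[R[i]]_(mult k))
  (hlam : injective lam)
  (hmult : forall k, (0 < mult k)%N)
  (hsum : (\sum_(k < l) mult k)%N = nu)
  (hN : forall k, jordan_nil (N k))
  (hVW : (\mxrow_(k < l) V k) *m (\mxcol_(k < l) ctrmx (W k)) = 1%:M)
  (hWV : (\mxcol_(k < l) ctrmx (W k)) *m (\mxrow_(k < l) V k) = 1%:M)
  (hF : F = (\mxrow_(k < l) V k)
              *m (\mxdiag_(k < l) ((lam k)%:M + N k))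
              *m (\mxcol_(k < l) ctrmx (W k))) :
  (forall H : 'M[R[i]]_(m, nu),
     is_Cp A B Cm D F H
       (\sum_(k < l) \sum_(j < mult k)
          ((-1) ^+ j *: (moment A B Cm D j (lam k) *m H
                          *m (V k *m (N k) ^+ j *m ctrmx (W k))))))
  /\
  (forall G : 'M[R[i]]_(nu, p),
     is_Cd A B Cm D F G
       (\sum_(k < l) \sum_(j < mult k)
          ((-1) ^+ j *: ((V k *m (N k) ^+ j *m ctrmx (W k)) *m G
                          *m moment A B Cm D j (lam k))))).
Proof.
have hFV : forall k, F *m V k = V k *m ((lam k)%:M + N k).
  move=> k.
  have : F *m (\mxrow_(k < l) V k) = \mxrow_(k < l) (V k *m ((lam k)%:M + N k)).
    by rewrite hF -!mulmxA hWV mulmx1 mxrow_mxdiag.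
  by move=> /(congr1 (fun X => submxrow X k)); rewrite -mul_submxrow !mxrowK.
have hWF : forall k, ctrmx (W k) *m F = ((lam k)%:M + N k) *m ctrmx (W k).
  move=> k.
  have : (\mxcol_(k < l) ctrmx (W k)) *m F
         = \mxcol_(k < l) (((lam k)%:M + N k) *m ctrmx (W k)).
    by rewrite hF !mulmxA hWV mul1mx mxdiag_mxcol.
  by move=> /(congr1 (fun X => submxcol X k)); rewrite -submxcol_mul !mxcolK.
have hsum1 : \sum_k V k *m ctrmx (W k) = 1%:M by rewrite -mul_mxrow_mxcol.
have hWV1 : forall k, ctrmx (W k) *m V k = 1%:M.
  move=> k; have := congr1 (fun X => submxblock X k k) hWV.
  by rewrite /= mul_mxcol_mxrow mxblockK submxblock1.
have hnil : forall k, N k ^+ mult k = 0 by move=> k; apply: nil_pow.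
have hunit : forall k, (lam k)%:M - A \in unitmx.
  move=> k.
  have eF : eigenvalue F (lam k).
    apply/eigenvalueP.
    have hl : ((mult k).-1 < mult k)%N by rewrite prednK.
    exists (row (Ordinal hl) (ctrmx (W k))).
      rewrite -row_mul hWF mulmxDl mul_scalar_mx linearD /= row_mul.
      have -> : row (Ordinal hl) (N k) = 0.
        apply/rowP => j; rewrite !mxE.
        case: (hN k (Ordinal hl) j) => [//|[hj _]].
        by move: (ltn_ord j); rewrite hj /= prednK ?ltnn.
      by rewrite mul0mx addr0 linearZ.
    apply/eqP => h0.
    have := congr1 (fun X => row (Ordinal hl) X) (hWV1 k).
    rewrite /= row_mul h0 mul0mx => /rowP /(_ (Ordinal hl)).
    by rewrite !mxE eqxx /= => /eqP; rewrite eq_sym oner_eq0.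
  have nA : ~~ eigenvalue A (lam k).
    by apply/negP => /hAF; rewrite eF.
  move: nA; rewrite /eigenvalue /eigenspace negbK kermx_eq0 row_free_unit => hu.
  have -> : (lam k)%:M - A = (-1) *: (A - (lam k)%:M) by rewrite scaleN1r opprB.
  by rewrite unitmxZ ?unitrN1.
split=> [H|G].
  pose Pk k := \sum_(j < mult k) (-1) ^+ j *:
     (invmx ((lam k)%:M - A) ^+ j.+1 *m (B *m H *m V k) *m N k ^+ j).
  have hPk : forall k (P : 'M_(n, mult k)),
      P *m ((lam k)%:M + N k) - A *m P = B *m H *m V k <-> P = Pk k.
    by move=> k P; apply: sylv_p.
  exists (\sum_k Pk k *m ctrmx (W k)); split.
  - rewrite mulmx_suml mulmx_sumr -sumrB.
    rewrite (eq_bigr (fun k => B *m H *m (V k *m ctrmx (W k)))).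
      by rewrite -mulmx_sumr hsum1 mulmx1.
    move=> k _; rewrite -[Pk k *m _ *m F]mulmxA hWF [Pk k *m _]mulmxA [A *m _]mulmxA -mulmxBl.
    by rewrite (proj2 (hPk k (Pk k)) erefl) mulmxA.
  - move=> Pi' hPi'.
    have hk : forall k, Pi' *m V k = Pk k.
      move=> k; apply/hPk.
      by rewrite -mulmxA -hFV mulmxA [A *m _]mulmxA -mulmxBl hPi'.
    rewrite -[Pi']mulmx1 -hsum1 mulmx_sumr; apply: eq_bigr => k _.
    by rewrite mulmxA hk.
  - rewrite -[D *m H]mulmx1 -hsum1 !mulmx_sumr -big_split; apply: eq_bigr => k _ /=.
    rewrite (eq_bigr (fun j : 'I_(mult k) =>
       (-1) ^+ j *: (Cm *m (invmx ((lam k)%:M - A) ^+ j.+1 *m (B *m H *m V k)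
                             *m N k ^+ j) *m ctrmx (W k))
       + (((j : nat) == 0%N)%:R : R[i]) *:
           ((-1) ^+ j *: (D *m H *m (V k *m N k ^+ j *m ctrmx (W k)))))).
      rewrite big_split /= (sum_delta0 (fun j => (-1) ^+ j *: (D *m H *m (V k *m N k ^+ j *m ctrmx (W k)))) (hmult k)) expr0 mulmx1 scale1r; congr (_ + _).
      rewrite /Pk mulmx_suml mulmx_sumr; apply: eq_bigr => j _.
      by rewrite [RHS]mulmxA -scalemxAr -scalemxAl !mulmxA.
    move=> j _; rewrite momentE mulmxDl mulmxDl scalerDr; congr (_ + _).
      by congr (_ *: _); rewrite !mulmxA.
    by rewrite -!scalemxAl !scalerA mulrC !mulmxA.
pose Qk k := - \sum_(j < mult k) (-1) ^+ j *:
   (N k ^+ j *m (ctrmx (W k) *m G *m Cm) *m invmx ((lam k)%:M - A) ^+ j.+1).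
have hQk : forall k (Q : 'M_(mult k, n)),
    Q *m A - ((lam k)%:M + N k) *m Q = ctrmx (W k) *m G *m Cm <-> Q = Qk k.
  by move=> k Q; apply: sylv_d.
exists (\sum_k V k *m Qk k); split.
- rewrite mulmx_suml mulmx_sumr -sumrB.
  rewrite (eq_bigr (fun k => V k *m ctrmx (W k) *m (G *m Cm))).
    by rewrite -mulmx_suml hsum1 mul1mx.
  move=> k _; rewrite -[V k *m Qk k *m A]mulmxA [F *m _]mulmxA hFV.
  rewrite -[V k *m _ *m Qk k]mulmxA -mulmxBr.
  by rewrite (proj2 (hQk k (Qk k)) erefl) !mulmxA.
- move=> M' hM'.
  have hk : forall k, ctrmx (W k) *m M' = Qk k.
    move=> k; apply/hQk.
    rewrite -[ctrmx (W k) *m M' *m A]mulmxA [_ *m (ctrmx (W k) *m M')]mulmxA -hWF.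
    by rewrite -[ctrmx (W k) *m F *m M']mulmxA -mulmxBr hM' mulmxA.
  rewrite -[M']mul1mx -hsum1 mulmx_suml; apply: eq_bigr => k _.
  by rewrite -mulmxA hk.
- rewrite -[G *m D]mul1mx -hsum1 !mulmx_suml mulNmx mulmx_suml -sumrN -big_split.
  apply: eq_bigr => k _ /=.
  rewrite (eq_bigr (fun j : 'I_(mult k) =>
     (-1) ^+ j *: (V k *m (N k ^+ j *m (ctrmx (W k) *m G *m Cm)
                   *m invmx ((lam k)%:M - A) ^+ j.+1) *m B)
     + (((j : nat) == 0%N)%:R : R[i]) *:
         ((-1) ^+ j *: (V k *m N k ^+ j *m ctrmx (W k) *m G *m D)))).
    rewrite big_split /= (sum_delta0 (fun j => (-1) ^+ j *: (V k *m N k ^+ j *m ctrmx (W k) *m G *m D)) (hmult k)) expr0 mulmx1 scale1r.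
    rewrite [V k *m ctrmx (W k) *m (G *m D)]mulmxA; congr (_ + _).
    rewrite /Qk mulmxN mulNmx opprK mulmx_sumr mulmx_suml; apply: eq_bigr => j _.
    by rewrite -scalemxAr -scalemxAl.
  move=> j _; rewrite momentE mulmxDr scalerDr; congr (_ + _).
    by congr (_ *: _); rewrite !mulmxA.
  by rewrite -scalemxAr !scalerA mulrC.
Qed.
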